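(* Let the setting be as in the context. For any function $\Phi:\omega_{h\widehat1}\times\{t_m\}_{m\ge0}\to\mathbb C$ with $\Phi^0=0$ and any $M\ge1$, \[ \mathrm{Im}\sum_{m=1}^M\Bigl(\mathcal S^m_{\rm ref}\mathbf\Phi^m,\ \frac{\Phi^{m-1}+\Phi^m}{2}\Bigr)_{\omega_{h\widehat1}}\tau\ \ge\ 0 . \]
   Context: Let $n\ge2$, $\hbar>0$, $c_\hbar>0$, $V_\infty\in\mathbb R$, $\tau>0$ and $t_m=m\tau$. Let $X_1,\dots,X_n>0$, integers $J_k\ge2$, $h_k=X_k/J_k$; $\omega_{h\widehat1}=\{(j_2h_2,\dots,j_nh_n):1\le j_k\le J_k-1\}$, with inner product $(U,W)_{\omega_{h\widehat1}}=\sum_{j_2=1}^{J_2-1}\cdots\sum_{j_n=1}^{J_n-1}U_{j_2,\dots,j_n}W^*_{j_2,\dots,j_n}h_2\cdots h_n$. Discrete sine transform in $x_k$ ($k\ge2$): $(\mathcal F_kP)^{(q)}=\frac2{J_k}\sum_{j=1}^{J_k-1}P_j\sin\frac{\pi qj}{J_k}$, $(\mathcal F_k^{-1}P^{(\cdot)})_j=\sum_{q=1}^{J_k-1}P^{(q)}\sin\frac{\pi qj}{J_k}$; $\lambda^{(k)}_q=\bigl(\frac2{h_k}\sin\frac{\pi qh_k}{2X_k}\bigr)^2$, $\sigma^{(k)}_q=1-\frac13\sin^2\frac{\pi qh_k}{2X_k}$. Discrete convolution $(R*Q)^m=\sum_{p=0}^mR^pQ^{m-p}$. With $\mathbf\Phi^m=\{\Phi^0,\dots,\Phi^m\}$,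 $\Phi^{\mathbf q}=(\mathcal F_n\cdots(\mathcal F_2\Phi)^{(q_2)}\cdots)^{(q_n)}$ for $\mathbf q=(q_2,\dots,q_n)$, $1\le q_k\le J_k-1$, define $\mathcal S^m_{\rm ref}\mathbf\Phi^m=\mathcal F_2^{-1}\cdots\mathcal F_n^{-1}\bigl[\sigma^{(2)}_{q_2}\cdots\sigma^{(n)}_{q_n}(R_{\mathbf q}*\Phi^{\mathbf q})^m\bigr]$, where $R_{\mathbf q}=R[V_{\infty,\mathbf q}]$ with $V_{\infty,\mathbf q}=V_\infty+c_\hbar\sum_{k=2}^n\lambda^{(k)}_{q_k}/\sigma^{(k)}_{q_k}$. For real $W_\infty$, $R[W_\infty]=(R^m)_{m\ge0}$ is given by $R^0=c_1$, $R^1=-c_1\varkappa\mu$, $R^m=\frac{2m-3}{m}\varkappa\mu R^{m-1}-\frac{m-3}{m}\varkappa^2R^{m-2}$ for $m\ge2$, where $a=\frac{W_\infty}{2c_\hbar}+i\frac{\hbar}{\tau c_\hbar}$, $\alpha=2a+\frac23h_1^2a^2\ (\ne0)$, $\arg\alpha\in(0,2\pi)$, $\beta=2\,\mathrm{Re}\,a+\frac23h_1^2|a|^2$, $c_1=-\frac{|\alpha|^{1/2}}2e^{-i(\arg\alpha)/2}$, $\varkappa=-e^{i\arg\alpha}$, $\mu=\beta/|\alpha|\in(-1,1)$. *)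

(* Defs.v *)
From HB Require Import structures.
From mathcomp Require Import all_boot all_order all_algebra.
From mathcomp Require Import complex.
From mathcomp Require Import reals trigo.
From Stdlib Require Import ClassicalEpsilon.

Set Implicit Arguments.
Unset Strict Implicit.
Unset Printing Implicit Defensive.

Import Order.TTheory GRing.Theory Num.Theory.
Local Open Scope ring_scope.
Local Open Scope complex_scope.

Section Defs.
Variable R : realType.

Definition cabs (z : R[i]) : R := Num.sqrt (complex.Re z ^+ 2 + complex.Im z ^+ 2).

Definition cexpi (t : R) : R[i] := cos t +i* sin t.

(* the argument of z taken in (0, 2 pi): the theta in (0,2pi) with
   z = |z| e^{i theta} (chosen by Hilbert's epsilon; unique when it exists) *)
Definition arg02pi (z : R[i]) : R :=
  epsilon (inhabits 0)
    (fun t : R => 0 < t < 2 * pi /\ z = (cabs z)%:C * cexpi t).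

Variables (hbar chbar tau h1 : R).

Definition acoef (W : R) : R[i] := (W / (2 * chbar)) +i* (hbar / (tau * chbar)).
Definition alphac (W : R) : R[i] :=
  2 * acoef W + (2 / 3 * h1 ^+ 2)%:C * acoef W ^+ 2.
Definition betac (W : R) : R :=
  2 * complex.Re (acoef W) + 2 / 3 * h1 ^+ 2 * cabs (acoef W) ^+ 2.
Definition c1coef (W : R) : R[i] :=
  - (Num.sqrt (cabs (alphac W)) / 2)%:C * cexpi (- arg02pi (alphac W) / 2).
Definition kappac (W : R) : R[i] := - cexpi (arg02pi (alphac W)).
Definition muc (W : R) : R := betac W / cabs (alphac W).

Fixpoint Rpair (W : R) (m : nat) : R[i] * R[i] :=
  match m with
  | 0%N => (c1coef W, - c1coef W * kappac W * (muc W)%:C)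
  | m'.+1 =>
      let: (r0, r1) := Rpair W m' in
      let k := (m'.+2)%N in
      (r1, ((2 * k%:R - 3) / k%:R)%:C * kappac W * (muc W)%:C * r1
           - ((k%:R - 3) / k%:R)%:C * kappac W ^+ 2 * r0)
  end.

Definition Rseq (W : R) (m : nat) : R[i] := (Rpair W m).1.

End Defs.

Definition dconv (R : realType) (A B : nat -> R[i]) (m : nat) : R[i] :=
  \sum_(p < m.+1) A p * B (m - p)%N.

Local Open Scope ring_scope.
Local Open Scope complex_scope.

(* Transverse directions x_2, ..., x_n: the transverse direction with index
   k : 'I_n.-1 is x_{k+2}.  X l, J l are X_l, J_l for 1 <= l <= n. *)

Definition midx (n : nat) (J : nat -> nat) : finType :=
  {dffun forall k : 'I_n.-1, 'I_(J k.+2)}.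

(* interior multi-indices: 1 <= j_l <= J_l - 1 for all l = 2..n,
   i.e. the points of omega_{h,hat1} (resp. the admissible q) *)
Definition interior (n : nat) (J : nat -> nat) (j : midx n J) : bool :=
  [forall k, (0 < j k)%N].

Section Grid.
Variables (R : realType) (n : nat) (X : nat -> R) (J : nat -> nat).

Definition hstep (l : nat) : R := X l / (J l)%:R.

Definition sinprod (q j : midx n J) : R :=
  \prod_(k < n.-1) sin (pi * (q k)%:R * (j k)%:R / (J k.+2)%:R).

(* Phi^q = (F_n ... (F_2 Phi)^(q_2) ... )^(q_n)  (composition of the 1-D
   discrete sine transforms, written as the nested sums) *)
Definition dst (P : midx n J -> R[i]) (q : midx n J) : R[i] :=
  (\prod_(k < n.-1) (2 / (J k.+2)%:R))%:C *
  \sum_(j | interior j) P j * (sinprod q j)%:C.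

Definition idst (P : midx n J -> R[i]) (j : midx n J) : R[i] :=
  \sum_(q | interior q) P q * (sinprod q j)%:C.

Definition lambdak (l q : nat) : R :=
  (2 / hstep l * sin (pi * q%:R * hstep l / (2 * X l))) ^+ 2.
Definition sigmak (l q : nat) : R :=
  1 - 1 / 3 * sin (pi * q%:R * hstep l / (2 * X l)) ^+ 2.

Definition ip (U W : midx n J -> R[i]) : R[i] :=
  \sum_(j | interior j) U j * conjc (W j) * (\prod_(k < n.-1) hstep k.+2)%:C.

Variables (hbar chbar Vinf tau : R).

Definition Vq (q : midx n J) : R :=
  Vinf + chbar * \sum_(k < n.-1) lambdak k.+2 (q k) / sigmak k.+2 (q k).

Definition Sref (Phi : nat -> midx n J -> R[i]) (m : nat) : midx n J -> R[i] :=
  idst (fun q =>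
    (\prod_(k < n.-1) sigmak k.+2 (q k))%:C *
    dconv (Rseq hbar chbar tau (hstep 1) (Vq q)) (fun p => dst (Phi p) q) m).

End Grid.

(* Main.v *)
Require Import Defs.
From HB Require Import structures.
From mathcomp Require Import all_boot all_order all_algebra.
From mathcomp Require Import complex.
From mathcomp Require Import reals trigo.
From mathcomp Require Import boolp.
From mathcomp Require Import ring lra zify.
From Stdlib Require Import ClassicalEpsilon.

Set Implicit Arguments.
Unset Strict Implicit.
Unset Printing Implicit Defensive.
Import Order.TTheory GRing.Theory Num.Theory.
Local Open Scope ring_scope.
Local Open Scope complex_scope.


Section PS.
Variable R : realType.
Local Notation C := (R[i]).

Record ps := PS { coef : nat -> C }.
HB.instance Definition _ := gen_eqMixin ps.
HB.instance Definition _ := gen_choiceMixin ps.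

Lemma ps_ext (a b : ps) : (forall i, coef a i = coef b i) -> a = b.
Proof. by case: a b => [a] [b] /= H; congr PS; apply/funext. Qed.

Definition ps0 := PS (fun _ => 0).
Definition psopp (a : ps) := PS (fun i => - coef a i).
Definition psadd (a b : ps) := PS (fun i => coef a i + coef b i).

Lemma psaddA : associative psadd.
Proof. by move=> a b c; apply: ps_ext => i /=; rewrite addrA. Qed.
Lemma psaddC : commutative psadd.
Proof. by move=> a b; apply: ps_ext => i /=; rewrite addrC. Qed.
Lemma psadd0 : left_id ps0 psadd.
Proof. by move=> a; apply: ps_ext => i /=; rewrite add0r. Qed.
Lemma psaddN : left_inverse ps0 psopp psadd.
Proof. by move=> a; apply: ps_ext => i /=; rewrite addNr. Qed.

HB.instance Definition _ := GRing.isZmodule.Build ps psaddA psaddC psadd0 psaddN.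

Definition trunc (a : nat -> C) (m : nat) : {poly C} := \poly_(i < m.+1) a i.

Lemma dconv_poly (a b : nat -> C) m k : (k <= m)%N ->
  dconv a b k = (trunc a m * trunc b m)`_k.
Proof.
move=> km; rewrite coefM /dconv; apply: eq_bigr => i _.
rewrite !coef_poly; have hi := ltn_ord i.
rewrite ifT; last by rewrite ltnS (leq_trans _ km) // -ltnS.
rewrite ifT //; rewrite ltnS (leq_trans _ km) //; exact: leq_subr.
Qed.

Lemma coefM_trunc (p : {poly C}) (a : nat -> C) m :
  (forall k, (k <= m)%N -> p`_k = a k) ->
  forall q : {poly C}, (q * p)`_m = (q * trunc a m)`_m.
Proof.
move=> H q; rewrite !coefM; apply: eq_bigr => i _.
rewrite coef_poly ifT; last by rewrite ltnS leq_subr.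
by rewrite H // leq_subr.
Qed.

Lemma dconvC (a b : nat -> C) m : dconv a b m = dconv b a m.
Proof. by rewrite !(dconv_poly _ _ (leqnn m)) mulrC. Qed.

Lemma dconvA (a b c : nat -> C) m :
  dconv a (dconv b c) m = dconv (dconv a b) c m.
Proof.
rewrite (dconv_poly _ _ (leqnn m)) (dconv_poly (dconv a b) c (leqnn m)).
rewrite -(@coefM_trunc (trunc b m * trunc c m)); last first.
  by move=> k km; rewrite (dconv_poly _ _ km).
rewrite [(trunc (dconv a b) m * _)]mulrC.
rewrite -(@coefM_trunc (trunc a m * trunc b m)); last first.
  by move=> k km; rewrite (dconv_poly _ _ km).
by rewrite mulrA [_ * trunc c m]mulrC mulrA.
Qed.

Definition psmul (a b : ps) := PS (dconv (coef a) (coef b)).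
Definition ps1 := PS (fun i => (i == 0%N)%:R).

Lemma psmulA : associative psmul.
Proof. by move=> a b c; apply: ps_ext => i /=; rewrite dconvA. Qed.
Lemma psmulC : commutative psmul.
Proof. by move=> a b; apply: ps_ext => i /=; rewrite dconvC. Qed.
Lemma psmul1 : left_id ps1 psmul.
Proof.
move=> a; apply: ps_ext => i /=; rewrite /dconv big_ord_recl /= mul1r subn0.
by rewrite big1 ?addr0 // => j _; rewrite mul0r.
Qed.
Lemma psmulDl : left_distributive psmul psadd.
Proof.
move=> a b c; apply: ps_ext => i /=; rewrite /dconv -big_split /=.
by apply: eq_bigr => j _; rewrite mulrDl.
Qed.
Lemma ps1_neq0 : ps1 != 0.
Proof.
apply/eqP => H; have := congr1 (fun a => coef a 0%N) H => /=.
by move/eqP; rewrite oner_eq0.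
Qed.

HB.instance Definition _ := GRing.Zmodule_isComNzRing.Build ps
  psmulA psmulC psmul1 psmulDl ps1_neq0.

Lemma pscD (a b : ps) i : coef (a + b) i = coef a i + coef b i. Proof. by []. Qed.
Lemma pscN (a : ps) i : coef (- a) i = - coef a i. Proof. by []. Qed.
Lemma pscB (a b : ps) i : coef (a - b) i = coef a i - coef b i. Proof. by []. Qed.
Lemma psc0 i : coef (0 : ps) i = 0. Proof. by []. Qed.
Lemma coefMps (a b : ps) i : coef (a * b) i = dconv (coef a) (coef b) i. Proof. by []. Qed.
Lemma psc1 i : coef (1 : ps) i = (i == 0%N)%:R. Proof. by []. Qed.


End PS.


Section Core.
Variable R : realType.
Local Notation C := (R[i]).
Local Notation ps := (ps R).

Lemma ImD (a b : C) : complex.Im (a + b) = complex.Im a + complex.Im b.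
Proof. by case: a b => ? ? [] ? ?. Qed.
Lemma ImN (a : C) : complex.Im (- a) = - complex.Im a.
Proof. by case: a. Qed.
Lemma Im_sum (I : Type) (r : seq I) (P : pred I) (F : I -> C) :
  complex.Im (\sum_(i <- r | P i) F i) = \sum_(i <- r | P i) complex.Im (F i).
Proof.
by apply: (big_morph (@complex.Im R)) => [a b|]; rewrite ?ImD.
Qed.
Lemma ImrM (c : R) (a : C) : complex.Im (c%:C * a) = c * complex.Im a.
Proof. by case: a => ? ? /=; ring. Qed.
Lemma conjcM (a b : C) : conjc (a * b) = conjc a * conjc b.
Proof. by case: a b => ? ? [] ? ? /=; simpc; congr (_ +i* _); ring. Qed.
Lemma conjcD (a b : C) : conjc (a + b) = conjc a + conjc b.
Proof. by case: a b => ? ? [] ? ? /=; simpc. Qed.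
Lemma conjcN (a : C) : conjc (- a) = - conjc a.
Proof. by case: a => ? ? /=; simpc. Qed.
Lemma conjcB (a b : C) : conjc (a - b) = conjc a - conjc b.
Proof. by rewrite conjcD conjcN. Qed.

Definition cst (c : C) : ps := PS (fun i => (i == 0%N)%:R * c).
Definition zz : ps := PS (fun i => (i == 1%N)%:R).

Lemma coef_cstM c (a : ps) i : coef (cst c * a) i = c * coef a i.
Proof.
rewrite coefMps /dconv big_ord_recl big1 => [|j _].
  by rewrite /= mul1r subn0 addr0.
by rewrite /bump /= !mul0r.
Qed.
Lemma coef_cst c i : coef (cst c) i = (i == 0%N)%:R * c. Proof. by []. Qed.
Lemma coef_zM (a : ps) i : coef (zz * a) i = if i is j.+1 then coef a j else 0.
Proof.
rewrite coefMps /dconv; case: i => [|i].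
  by rewrite big_ord1 /= mul0r.
rewrite big_ord_recl /= mul0r add0r big_ord_recl /= mul1r subSS subn0.
by rewrite big1 ?addr0 // => j _; rewrite mul0r.
Qed.
Lemma coefM0 (a b : ps) : coef (a * b) 0 = coef a 0 * coef b 0.
Proof. by rewrite coefMps /dconv big_ord1. Qed.

Lemma cstM a b : cst (a * b) = cst a * cst b.
Proof. by apply: ps_ext => i; rewrite coef_cstM /= mulrCA. Qed.
Lemma cstD a b : cst (a + b) = cst a + cst b.
Proof. by apply: ps_ext => i /=; rewrite mulrDr. Qed.
Lemma cstN a : cst (- a) = - cst a.
Proof. by apply: ps_ext => i /=; rewrite mulrN. Qed.
Lemma cstB a b : cst (a - b) = cst a - cst b.
Proof. by rewrite cstD cstN. Qed.
Lemma cst1 : cst 1 = 1.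
Proof. by apply: ps_ext => i /=; rewrite mulr1. Qed.
Lemma cst0 : cst 0 = 0.
Proof. by apply: ps_ext => i /=; rewrite mulr0. Qed.

Lemma coef_lin (a b : C) (x : ps) m :
  coef ((cst a + cst b * zz) * x) m.+1 = a * coef x m.+1 + b * coef x m.
Proof. by rewrite mulrDl pscD -mulrA !coef_cstM coef_zM. Qed.

Fixpoint invl (u : nat -> C) (n : nat) : seq C :=
  match n with
  | 0%N => [:: (u 0%N)^-1]
  | n'.+1 => let s := invl u n' in
      rcons s (- (u 0%N)^-1 * \sum_(i < n'.+1) u i.+1 * nth 0 s (n' - i))
  end.

Lemma size_invl u n : size (invl u n) = n.+1.
Proof. by elim: n => [|n IH] //=; rewrite size_rcons IH. Qed.

Lemma nth_invl u n i : (i <= n)%N -> nth 0 (invl u n) i = nth 0 (invl u i) i.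
Proof.
elim: n => [|n IH]; first by rewrite leqn0 => /eqP ->.
rewrite leq_eqVlt => /orP [/eqP -> //|]; rewrite ltnS => lin.
by rewrite /= nth_rcons size_invl ltnS lin IH.
Qed.

Definition invps (u : ps) : ps := PS (fun m => nth 0 (invl (coef u) m) m).

Lemma invpsP (u : ps) : coef u 0 != 0 -> u * invps u = 1.
Proof.
move=> u0; apply: ps_ext => m; rewrite coefMps psc1 /dconv.
case: m => [|n].
  by rewrite big_ord1 /= mulfV.
rewrite big_ord_recl /= subn0.
have -> : nth 0 (invl (coef u) n.+1) n.+1 =
   - (coef u 0)^-1 * \sum_(i < n.+1) coef u i.+1 * nth 0 (invl (coef u) n) (n - i).
  by rewrite /= nth_rcons size_invl ltnn eqxx.
rewrite mulrA mulrN mulfV // mulN1r.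
suff -> : \sum_(i < n.+1) coef u (bump 0 i) * nth 0 (invl (coef u) (n.+1 - bump 0 i)) (n.+1 - bump 0 i)
  = \sum_(i < n.+1) coef u i.+1 * nth 0 (invl (coef u) n) (n - i) by rewrite addNr.
apply: eq_bigr => i _; rewrite /bump /= add1n subSS; congr (_ * _).
by symmetry; apply: nth_invl; exact: leq_subr.
Qed.

Definition vanish (k : nat) (x : ps) := forall j, (j < k)%N -> coef x j = 0.

Lemma vanishM k (a x : ps) : vanish k x -> vanish k (a * x).
Proof.
move=> H j jk; rewrite coefMps /dconv big1 // => p _.
by rewrite H ?mulr0 // (leq_ltn_trans (leq_subr _ _) jk).
Qed.

Lemma vanishM0 k (a x : ps) : coef a 0 = 0 -> vanish k x -> vanish k.+1 (a * x).
Proof.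
move=> a0 H j jk; rewrite coefMps /dconv big1 // => p _.
case: (posnP p) => [p0|pp]; first by rewrite p0 a0 mul0r.
rewrite H ?mulr0 //; have := ltn_ord p; lia.
Qed.

End Core.


Section Core2.
Variable R : realType.
Local Notation C := (R[i]).
Local Notation ps := (ps R).
Local Notation cst := (@cst R).
Local Notation zz := (@zz R).

Definition eform (u v : C) : R :=
  5 * (complex.Re u ^+ 2 + complex.Im u ^+ 2) + 5 * (complex.Re v ^+ 2 + complex.Im v ^+ 2)
  + 2 * (complex.Re u * complex.Re v + complex.Im u * complex.Im v).

Lemma eform_ge0 u v : 0 <= eform u v.
Proof.
case: u v => a b [c d]; rewrite /eform /=.
have -> : 5 * (a ^+ 2 + b ^+ 2) + 5 * (c ^+ 2 + d ^+ 2) + 2 * (a * c + b * d)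
  = 4 * (a ^+ 2 + b ^+ 2 + c ^+ 2 + d ^+ 2) + ((a + c) ^+ 2 + (b + d) ^+ 2) by ring.
by rewrite addr_ge0 // ?mulr_ge0 // ?addr_ge0 // sqr_ge0.
Qed.

Lemma eform0 : eform 0 0 = 0.
Proof. by rewrite /eform /=; ring. Qed.

Lemma elem_step (x w y : R) (u u' v v' : C) :
  complex.Im (((x +i* y) * v + (x -i* y) * v' - ((w -i* (5 * y)) * u + (w +i* (5 * y)) * u')) * conjc (u + u')
    + ((x +i* y) * u + (x -i* y) * u' - ((w -i* (5 * y)) * v + (w +i* (5 * y)) * v')) * conjc (v + v'))
  = y * eform u v - y * eform u' v'.
Proof.
case: u => a b; case: u' => a' b'; case: v => c d; case: v' => c' d'.
rewrite /eform /=. ring.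
Qed.

Variables (x w y : R).
Definition Dp : ps := cst (x +i* y) + cst (x -i* y) * zz.
Definition Kp : ps := cst (w -i* (5 * y)) + cst (w +i* (5 * y)) * zz.
Definition Sp : ps := 1 + zz.

Lemma Sp_lin : Sp = cst 1 + cst 1 * zz.
Proof. by rewrite /Sp cst1 mul1r. Qed.

Definition Bf (M : nat) (L a b : ps) : C :=
  \sum_(1 <= m < M.+1) coef (L * a) m * conjc (coef (Sp * b) m).

Lemma elem_sum (M : nat) (u v : ps) : coef u 0 = 0 -> coef v 0 = 0 ->
  complex.Im (\sum_(1 <= m < M.+1)
    (coef (Dp * v - Kp * u) m * conjc (coef (Sp * u) m)
     + coef (Dp * u - Kp * v) m * conjc (coef (Sp * v) m)))
  = y * eform (coef u M) (coef v M).
Proof.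
move=> u0 v0; rewrite Im_sum big_add1.
rewrite (@telescope_sumr_eq _ 0 M (fun k => y * eform (coef u k) (coef v k))) //.
  by rewrite u0 v0 eform0 mulr0 subr0.
move=> k _; cbv beta; rewrite !pscB Sp_lin !coef_lin !mul1r.
exact: elem_step.
Qed.

Lemma BfDl M L a b c : Bf M L (a + b) c = Bf M L a c + Bf M L b c.
Proof.
rewrite /Bf -big_split; apply: eq_bigr => m _.
by rewrite mulrDr pscD mulrDl.
Qed.
Lemma BfDr M L a b c : Bf M L c (a + b) = Bf M L c a + Bf M L c b.
Proof.
rewrite /Bf -big_split; apply: eq_bigr => m _.
by rewrite mulrDr pscD conjcD mulrDr.
Qed.
Lemma Bfcl M L r a c : Bf M L (cst r * a) c = r * Bf M L a c.
Proof.
rewrite /Bf big_distrr; apply: eq_bigr => m _.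
by rewrite [L * _]mulrCA coef_cstM -mulrA.
Qed.
Lemma Bfcr M L r a c : Bf M L a (cst r * c) = conjc r * Bf M L a c.
Proof.
rewrite /Bf big_distrr; apply: eq_bigr => m _.
by rewrite [Sp * _]mulrCA coef_cstM conjcM mulrCA.
Qed.

Lemma Bf_vanish M L a c : vanish M.+1 a -> Bf M L a c = 0.
Proof.
move=> H; rewrite /Bf big1_seq // => m; rewrite mem_index_iota => /andP [_ /andP [_ mM]].
by rewrite (vanishM L H mM) mul0r.
Qed.

Lemma mobius M L (q : ps) (a : ps) :
  let q0 := coef q 0 in
  Bf M L ((1 - cst (conjc q0) * q) * a) ((1 - cst (conjc q0) * q) * a)
  - Bf M L ((q - cst q0) * a) ((q - cst q0) * a)
  = (1 - q0 * conjc q0) * (Bf M L a a - Bf M L (q * a) (q * a)).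
Proof.
move=> q0.
have E1 : (1 - cst (conjc q0) * q) * a = a + cst (- conjc q0) * (q * a).
  by rewrite cstN; ring.
have E2 : (q - cst q0) * a = q * a + cst (- q0) * a.
  by rewrite cstN; ring.
rewrite E1 E2 !BfDl !BfDr !Bfcl !Bfcr !conjcN conjcK.
ring.
Qed.

End Core2.


Section Core3.
Variable R : realType.
Local Notation C := (R[i]).
Local Notation ps := (ps R).
Local Notation cst := (@cst R).
Local Notation zz := (@zz R).

Lemma coef_lin0 (a b : C) : coef (cst a + cst b * zz) 0 = a.
Proof. by rewrite pscD coef_cstM /= mul1r mulr0 addr0. Qed.

Lemma vanish_le k k' (a : ps) : (k' <= k)%N -> vanish k a -> vanish k' a.
Proof. by move=> kk H j jk; apply: H; apply: leq_trans kk. Qed.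

Lemma q0_lt1 (x w y : R) (q0 L0 : C) : 0 < y -> 0 < complex.Im L0 ->
  (x +i* y) * q0 = L0 + (w -i* (5 * y)) ->
  q0 * ((w -i* (5 * y)) - L0) = x +i* y ->
  complex.Re q0 ^+ 2 + complex.Im q0 ^+ 2 < 1.
Proof.
move=> yp Lp H1 H2.
have H1' : L0 = (x +i* y) * q0 - (w -i* (5 * y)) by rewrite H1; ring.
have H2' : L0 * q0 = q0 * (w -i* (5 * y)) - (x +i* y) by rewrite -H2; ring.
have E : L0 * (1 - q0 * conjc q0) =
   (x +i* y) * q0 - (w -i* (5 * y)) + (x +i* y) * conjc q0
   - (w -i* (5 * y)) * (q0 * conjc q0).
  rewrite mulrBr mulr1 [L0 * (q0 * _)]mulrA H2' H1'; ring.
move: E Lp; clear H1 H2 H1' H2'; case: q0 => a b; case: L0 => l1 l2 /= E Lp.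
have := congr1 (@complex.Im R) E => /=.
move=> E2.
have E3 : l2 * (1 - (a ^+ 2 + b ^+ 2)) = y * (5 * (1 + (a ^+ 2 + b ^+ 2)) + 2 * a).
  move: E2; rewrite !expr2 => E2; lra.
have hp : 0 < y * (5 * (1 + (a ^+ 2 + b ^+ 2)) + 2 * a).
  apply: mulr_gt0 => //.
  have -> : 5 * (1 + (a ^+ 2 + b ^+ 2)) + 2 * a = 4 + 4 * (a ^+ 2 + b ^+ 2) + ((a + 1) ^+ 2 + b ^+ 2) by ring.
  by rewrite ltr_wpDr ?addr_ge0 ?sqr_ge0 // ltr_wpDr ?mulr_ge0 ?addr_ge0 ?sqr_ge0.
rewrite -E3 in hp.
rewrite -subr_gt0; move: hp; rewrite pmulr_rgt0 //.
Qed.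

End Core3.

Section Main1D.
Variable R : realType.
Local Notation C := (R[i]).
Local Notation ps := (ps R).
Local Notation cst := (@cst R).
Local Notation zz := (@zz R).
Variables (x w y : R).
Local Notation Dp := (Dp x y).
Local Notation Kp := (Kp w y).

Lemma nz_cplx (a b : R) : b != 0 -> a +i* b != 0.
Proof. by move=> hb; apply/eqP => -[_ /eqP]; rewrite (negPf hb). Qed.

Theorem core1D (L : ps) : 0 < y -> L * L = Kp * Kp - Dp * Dp ->
  0 < complex.Im (coef L 0) ->
  forall M (phi : ps), coef phi 0 = 0 -> 0 <= complex.Im (Bf M L phi phi).
Proof.
move=> yp hL hL0 M.
have D0 : coef Dp 0 = x +i* y by rewrite coef_lin0.
have K0 : coef Kp 0 = w -i* (5 * y) by rewrite coef_lin0.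
have D0nz : coef Dp 0 != 0 by rewrite D0 nz_cplx // gt_eqF.
set q := (L + Kp) * invps Dp.
have hDq : Dp * q = L + Kp by rewrite /q mulrCA invpsP // mulr1.
have node : q * (Kp - L) = Dp.
  have H : Dp * (q * (Kp - L) - Dp) = 0.
    rewrite mulrBr mulrA hDq.
    have -> : (L + Kp) * (Kp - L) - Dp * Dp = Kp * Kp - L * L - Dp * Dp by ring.
    rewrite hL; ring.
  have := congr1 (fun t => invps Dp * t) H.
  rewrite mulrA [invps Dp * Dp]mulrC invpsP // mul1r mulr0 => /eqP.
  by rewrite subr_eq0 => /eqP.
set q0 := coef q 0.
have hq0 : complex.Re q0 ^+ 2 + complex.Im q0 ^+ 2 < 1.
  apply: (@q0_lt1 _ x w y q0 (coef L 0)) => //.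
    by rewrite -D0 -K0 -coefM0 hDq pscD.
  by rewrite -D0 -K0 -pscB -coefM0 node.
set cR := 1 - (complex.Re q0 ^+ 2 + complex.Im q0 ^+ 2).
have cRp : 0 < cR by rewrite subr_gt0.
have cE : 1 - q0 * conjc q0 = cR%:C.
  rewrite /cR; case: (q0) => a b /=; simpc; congr (_ +i* _); ring.
set U := 1 - cst (conjc q0) * q.
set N := q - cst q0.
have U0 : coef U 0 != 0.
  have -> : coef U 0 = 1 - q0 * conjc q0.
    by rewrite /U pscB coefM0 psc1 coef_cst mulrC mul1r.
  rewrite cE; by apply/eqP => -[/eqP]; rewrite gt_eqF.
have N0 : coef N 0 = 0 by rewrite /N pscB coef_cst mul1r subrr.
have step : forall psi : ps, coef psi 0 = 0 ->
    0 <= complex.Im (Bf M L psi psi) - complex.Im (Bf M L (q * psi) (q * psi)).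
  move=> psi psi0.
  have qpsi0 : coef (q * psi) 0 = 0 by rewrite coefM0 psi0 mulr0.
  have := elem_sum x w y M psi0 qpsi0.
  have -> : Dp * (q * psi) - Kp * psi = L * psi by rewrite mulrA hDq; ring.
  have -> : Dp * psi - Kp * (q * psi) = - (L * (q * psi)).
    rewrite -node; ring.
  rewrite big_split /= -/(Bf M L psi psi) ImD.
  have -> : \sum_(1 <= i < M.+1) coef (- (L * (q * psi))) i * (coef (Sp R * (q * psi)) i)^*%C
     = - Bf M L (q * psi) (q * psi).
    by rewrite /Bf -sumrN; apply: eq_bigr => i _; rewrite pscN mulNr.
  rewrite ImN => ->.
  by apply: mulr_ge0; [exact: ltW | exact: eform_ge0].
suff H : forall d (phi : ps), vanish (M.+1 - d) phi -> coef phi 0 = 0 ->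
    0 <= complex.Im (Bf M L phi phi).
  by move=> phi phi0; apply: (H M.+1) => //; rewrite subnn => j.
elim=> [|d IH] phi van phi0.
  by rewrite Bf_vanish ?subn0 //.
set psi := invps U * phi.
have UP : U * psi = phi by rewrite /psi mulrA invpsP // mul1r.
have psi0 : coef psi 0 = 0 by rewrite coefM0 phi0 mulr0.
have E : Bf M L (U * psi) (U * psi) - Bf M L (N * psi) (N * psi)
   = (1 - q0 * conjc q0) * (Bf M L psi psi - Bf M L (q * psi) (q * psi))
  := mobius M L q psi.
rewrite UP in E.
have -> : Bf M L phi phi = Bf M L (N * psi) (N * psi) + (1 - q0 * conjc q0) *
   (Bf M L psi psi - Bf M L (q * psi) (q * psi)) by rewrite -E; ring.
rewrite ImD cE ImrM; apply: addr_ge0; last by apply: mulr_ge0; [exact: ltW | rewrite ImD ImN; exact: step].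
apply: IH; last by rewrite coefM0 N0 mul0r.
apply: (@vanish_le _ (M.+1 - d.+1).+1); first by lia.
by apply: vanishM0 => //; apply: vanishM.
Qed.

End Main1D.


Section ODE.
Variable R : realType.
Local Notation C := (R[i]).
Local Notation ps := (ps R).
Local Notation cst := (@cst R).
Local Notation zz := (@zz R).

Definition dps (a : ps) : ps := PS (fun m => (m.+1)%:R * coef a m.+1).
Lemma coef_dps a m : coef (dps a) m = (m.+1)%:R * coef a m.+1. Proof. by []. Qed.

Lemma dpsD a b : dps (a + b) = dps a + dps b.
Proof. by apply: ps_ext => m; rewrite pscD !coef_dps pscD mulrDr. Qed.
Lemma dpsN a : dps (- a) = - dps a.
Proof. by apply: ps_ext => m; rewrite pscN !coef_dps pscN mulrN. Qed.
Lemma dpsB a b : dps (a - b) = dps a - dps b.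
Proof. by rewrite dpsD dpsN. Qed.
Lemma dps_cst c a : dps (cst c * a) = cst c * dps a.
Proof. by apply: ps_ext => m; rewrite coef_cstM !coef_dps coef_cstM mulrCA. Qed.

Lemma dpsM a b : dps (a * b) = dps a * b + a * dps b.
Proof.
apply: ps_ext => m; rewrite pscD !coefMps coef_dps coefMps /dconv.
transitivity (\sum_(i < m.+2) (i%:R * (coef a i * coef b (m.+1 - i)))
            + \sum_(i < m.+2) ((m.+1 - i)%:R * (coef a i * coef b (m.+1 - i)))).
  rewrite big_distrr -big_split /=; apply: eq_bigr => i _.
  by rewrite -mulrDl -natrD subnKC // -ltnS.
congr (_ + _).
  rewrite big_ord_recl mul0r add0r; apply: eq_bigr => i _.
  by rewrite coef_dps lift0 subSS mulrA.
set RHS := (X in _ = X); rewrite big_ord_recr /= subnn mul0r addr0 /RHS; apply: eq_bigr => i _.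
rewrite coef_dps subSn; last by have := ltn_ord i; rewrite ltnS.
by rewrite mulrCA.
Qed.

Definition quad (a b c : C) : ps := cst a + cst b * zz + cst c * (zz * zz).

Lemma coef_quad a b c g m : coef (quad a b c * g) m =
  a * coef g m + (if m is m'.+1 then b * coef g m' else 0)
  + (if m is m'.+2 then c * coef g m' else 0).
Proof.
rewrite /quad !mulrDl !pscD -!mulrA !coef_cstM !coef_zM.
by case: m => [|[|m]]; rewrite ?coef_zM ?mulr0 ?addr0.
Qed.

Lemma coef_quad0 a b c m : coef (quad a b c) m =
  (m == 0%N)%:R * a + (m == 1%N)%:R * b + (m == 2%N)%:R * c.
Proof.
rewrite -[quad a b c]mulr1 coef_quad !psc1.
by case: m => [|[|[|m]]] /=; rewrite ?mulr1 ?mulr0 ?mul1r ?mul0r ?addr0 ?add0r.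
Qed.

Lemma dps_quad a b c : dps (quad a b c) = cst b + cst (2 * c) * zz.
Proof.
apply: ps_ext => m; rewrite coef_dps coef_quad0 pscD coef_cstM coef_cst.
case: m => [|[|m]] /=; rewrite ?mulr0 ?mul0r ?mulr1 ?mul1r ?addr0 ?add0r //; exact: mulr0.
Qed.

Lemma quad_uniq (b c : C) (d : ps) : coef d 0 = 0 ->
  quad 1 b c * dps d = (cst b + cst (2 * c) * zz) * d -> d = 0.
Proof.
move=> d0 E.
suff H : forall m, forall j, (j <= m)%N -> coef d j = 0.
  by apply: ps_ext => m; rewrite (H m m) // psc0.
elim=> [|m IH] j; first by rewrite leqn0 => /eqP ->.
rewrite leq_eqVlt => /orP [/eqP ->|]; last by rewrite ltnS; exact: IH.
have := congr1 (fun t => coef t m) E.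
rewrite coef_quad !coef_dps mulrDl pscD coef_cstM -mulrA coef_cstM coef_zM mul1r.
case: m IH => [|[|m]] IH /=; rewrite ?coef_dps.
- rewrite d0 !mulr0 !addr0 => /eqP; rewrite mulf_eq0 pnatr_eq0 /= => /eqP //.
- rewrite (IH 1%N) // (IH 0%N) // !mulr0 !addr0 => /eqP.
  by rewrite mulf_eq0 pnatr_eq0 /= => /eqP.
- rewrite (IH m.+2) // (IH m.+1) // ?mulr0 ?addr0 => /eqP.
  by rewrite mulf_eq0 pnatr_eq0 /= => /eqP.
Qed.

End ODE.

Section ODE2.
Variable R : realType.
Local Notation C := (R[i]).
Local Notation ps := (ps R).
Local Notation cst := (@cst R).
Local Notation zz := (@zz R).

Lemma cst2 : cst 2 = 1 + 1.
Proof. by rewrite -cst1 -cstD. Qed.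

Theorem ode_square (f : nat -> C) (ka mu : C) :
  f 1%N = - f 0%N * ka * mu ->
  (forall m, (m.+2)%:R * f m.+2 =
      (2 * (m.+2)%:R - 3) * ka * mu * f m.+1 - ((m.+2)%:R - 3) * ka ^+ 2 * f m) ->
  PS f * PS f = cst (f 0%N ^+ 2) * quad 1 (- 2 * ka * mu) (ka ^+ 2).
Proof.
move=> h1 hS.
set F := PS f.
set lin := cst (- 2 * ka * mu) + cst (2 * ka ^+ 2) * zz.
set Q := quad 1 (- 2 * ka * mu) (ka ^+ 2).
have C1 : cst 2 * (Q * dps F) = lin * F.
  apply: ps_ext => m; rewrite coef_cstM /Q coef_quad /lin (mulrDl (cst _) (cst _ * zz) F) pscD -[cst _ * zz * F]mulrA !coef_cstM coef_zM.
  case: m => [|[|n]]; rewrite !coef_dps /=.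
  - rewrite h1; ring.
  - have := hS 0%N; rewrite /= => E.
    rewrite addr0 !mul1r E; ring.
  - have := hS n.+1 => E.
    rewrite !mul1r E; rewrite !mulrSr; ring.
have C2 : Q * dps (F * F) = lin * (F * F).
  rewrite dpsM.
  have -> : Q * (dps F * F + F * dps F) = (1 + 1) * (Q * dps F) * F by ring.
  by rewrite -cst2 C1; ring.
have C3 : Q * dps (cst (f 0%N ^+ 2) * Q) = lin * (cst (f 0%N ^+ 2) * Q).
  by rewrite dps_cst /Q dps_quad -/lin; ring.
have D0 : coef (F * F - cst (f 0%N ^+ 2) * Q) 0 = 0.
  by rewrite pscB coefM0 coef_cstM coef_quad0 /= mul1r !mul0r !addr0 mulr1 expr2 subrr.
apply/eqP; rewrite -subr_eq0; apply/eqP.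
apply: (@quad_uniq _ (- 2 * ka * mu) (ka ^+ 2) _ D0).
rewrite -/Q; by rewrite dpsB mulrBr C2 C3 -/lin mulrBr.
Qed.

End ODE2.


Section Arg.
Variable R : realType.
Local Notation C := (R[i]).

Lemma cabs_gt0 (z : C) : z != 0 -> 0 < cabs z.
Proof.
case: z => a b nz; rewrite /cabs /= sqrtr_gt0.
have : (a != 0) || (b != 0).
  by rewrite -negb_and; apply/negP => /andP [/eqP a0 /eqP b0]; move: nz; rewrite a0 b0 eqxx.
case/orP => h.
  by rewrite ltr_wpDr ?sqr_ge0 // lt0r sqrf_eq0 h sqr_ge0.
by rewrite ltr_wpDl ?sqr_ge0 // lt0r sqrf_eq0 h sqr_ge0.
Qed.

Lemma cabs_sq (z : C) : cabs z ^+ 2 = complex.Re z ^+ 2 + complex.Im z ^+ 2.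
Proof. by rewrite /cabs sqr_sqrtr // addr_ge0 // sqr_ge0. Qed.

Lemma arg_exists (z : C) : (complex.Im z != 0) || (complex.Re z < 0) ->
  exists t : R, 0 < t < 2 * pi /\ z = (cabs z)%:C * cexpi t.
Proof.
move=> hz.
have z0 : z != 0 by move: hz; case: z => a b /=; apply: contraTneq => -[-> ->]; rewrite eqxx ltxx.
have sp := cabs_gt0 z0.
set s := cabs z in sp *.
have ssq : s ^+ 2 = complex.Re z ^+ 2 + complex.Im z ^+ 2 by rewrite cabs_sq.
move: hz ssq; case: z z0 s sp => a b /= _ s sp hz ssq.
set c := a / s.
have c2 : 1 - c ^+ 2 = (b / s) ^+ 2.
  rewrite /c !expr_div_n ssq; field; apply/eqP => H.
  by move: sp; rewrite lt0r => /andP []; rewrite -sqrf_eq0 ssq H eqxx.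
have cm : -1 <= c <= 1.
  have hc : c ^+ 2 <= 1 by rewrite -subr_ge0 c2 sqr_ge0.
  rewrite -ler_norml; move: hc; rewrite -[c ^+ 2]real_normK ?num_real //.
  by rewrite expr_le1 // normr_ge0.
have clt1 : c < 1.
  rewrite lt_neqAle (andP cm).2 andbT; apply/eqP => c1.
  move: c2; rewrite c1 expr1n subrr => /esym/eqP; rewrite sqrf_eq0 mulf_eq0 invr_eq0 (gt_eqF sp) orbF => /eqP b0.
  move: hz; rewrite b0 eqxx /= => alt0.
  have : a / s * s = 1 * s by rewrite -/c c1.
  rewrite mulfVK ?gt_eqF // mul1r => ea.
  by move: alt0; rewrite ea ltNge ltW.
have sinac : sin (acos c) = `|b| / s.
  rewrite sin_acos // c2 sqrtr_sqr normrM (@ger0_norm _ s^-1); last by rewrite invr_ge0 ltW.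
  by [].
have acos_pos : 0 < acos c by apply: acos_gt0; rewrite clt1 (andP cm).1.
have acos_le : acos c <= pi by apply: acos_lepi.
have cosac : cos (acos c) = c by apply: acosK; rewrite in_itv /=.
case: (leP 0 b) => hb.
  exists (acos c); split.
    by rewrite acos_pos /=; apply: (le_lt_trans acos_le); rewrite ltr_pMl ?pi_gt0 // ltr1n.
  rewrite /cexpi cosac sinac ger0_norm //; simpc; congr (_ +i* _).
    by rewrite /c mulrC mulfVK ?gt_eqF.
  by rewrite mulrC mulfVK ?gt_eqF.
exists (2 * pi - acos c); split.
  rewrite subr_gt0 ltrBlDr ltrDl acos_pos andbT.
  by apply: (le_lt_trans acos_le); rewrite ltr_pMl ?pi_gt0 // ltr1n.
have e2 : 2 * pi = pi *+ 2 :> R by rewrite mulr_natl.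
rewrite /cexpi e2 cosB sinB cos2pi sin2pi cosac sinac ltr0_norm //; simpc.
congr (_ +i* _); first by rewrite /c; field; rewrite gt_eqF.
by field; rewrite gt_eqF.
Qed.

Lemma arg_spec (z : C) : (complex.Im z != 0) || (complex.Re z < 0) ->
  0 < arg02pi z < 2 * pi /\ z = (cabs z)%:C * cexpi (arg02pi z).
Proof.
move=> hz; rewrite /arg02pi.
by apply: (epsilon_spec (inhabits 0) (fun t : R => 0 < t < 2 * pi /\ z = (cabs z)%:C * cexpi t)); apply: arg_exists.
Qed.

End Arg.


Section OneD.
Variable R : realType.
Local Notation C := (R[i]).
Variables (hbar chbar tau h W : R).
Local Notation f := (Rseq hbar chbar tau h W).
Local Notation c1 := (c1coef hbar chbar tau h W).
Local Notation ka := (kappac hbar chbar tau h W).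
Local Notation mu := (muc hbar chbar tau h W).

Lemma Rpair_snd m : (Rpair hbar chbar tau h W m).2 = f m.+1.
Proof. by rewrite /Rseq /=; case: (Rpair hbar chbar tau h W m). Qed.

Lemma Rseq0 : f 0%N = c1. Proof. by []. Qed.
Lemma Rseq1 : f 1%N = - c1 * ka * mu%:C. Proof. by []. Qed.

Lemma RseqSS m : f m.+2 =
  ((2 * (m.+2)%:R - 3) / (m.+2)%:R)%:C * ka * mu%:C * f m.+1
  - (((m.+2)%:R - 3) / (m.+2)%:R)%:C * ka ^+ 2 * f m.
Proof.
by rewrite /Rseq /=; case: (Rpair hbar chbar tau h W m).
Qed.

Lemma Rseq_rec m : (m.+2)%:R * f m.+2 =
  (2 * (m.+2)%:R - 3) * ka * mu%:C * f m.+1 - ((m.+2)%:R - 3) * ka ^+ 2 * f m.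
Proof.
rewrite RseqSS; set mm := mu%:C.
rewrite !rmorphM !fmorphV !rmorphB !rmorphM !rmorph_nat.
have k0 : (m.+2)%:R != 0 :> C by rewrite pnatr_eq0.
field; by rewrite -[2]/(2%:R) -natrD pnatr_eq0.
Qed.

End OneD.

Ltac fld := field; rewrite ?andbT //; repeat (apply/andP; split); rewrite ?gt_eqF //.

Section Facts.
Variable R : realType.
Local Notation C := (R[i]).
Local Notation cst := (@cst R).
Local Notation zz := (@zz R).
Variables (hbar chbar tau h W : R).
Local Notation A := (W / (2 * chbar)).
Local Notation B := (hbar / (tau * chbar)).

Lemma acoef_eq : acoef hbar chbar tau W = A +i* B. Proof. by []. Qed.

Lemma alpha_eq : alphac hbar chbar tau h W =
  (2 * A + 2 / 3 * h ^+ 2 * (A ^+ 2 - B ^+ 2)) +i* (2 * B + 2 / 3 * h ^+ 2 * (2 * A * B)).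
Proof.
rewrite /alphac acoef_eq.
have -> : (2 : C) = 2%:C by rewrite rmorph_nat.
rewrite expr2 /=; simpc; congr (_ +i* _); ring.
Qed.


Lemma alpha_cond : 0 < B -> 0 < h ->
  (complex.Im (alphac hbar chbar tau h W) != 0) || (complex.Re (alphac hbar chbar tau h W) < 0).
Proof.
move=> Bp hp; rewrite alpha_eq /=.
set k := 2 / 3 * h ^+ 2.
have kp : 0 < k by rewrite /k; apply: mulr_gt0; [lra | exact: exprn_gt0].
case: eqP => //= H.
have e : 1 + k * A = 0.
  have : 2 * B * (1 + k * A) = 0 by rewrite -H; ring.
  move/eqP; rewrite mulf_eq0 => /orP [/eqP H2|/eqP //]; exfalso.
  have : 0 < 2 * B by apply: mulr_gt0; [lra | exact: Bp].
  by rewrite H2 ltxx.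
have An : A < 0 by nra.
have -> : 2 * A + k * (A ^+ 2 - B ^+ 2) = A + A * (1 + k * A) - k * B ^+ 2 by ring.
rewrite e mulr0 addr0.
have : 0 <= k * B ^+ 2 by apply: mulr_ge0; [exact: ltW | exact: sqr_ge0].
lra.
Qed.


Lemma cst_quad (a b c : C) : cst a * quad 1 b c = quad a (a * b) (a * c).
Proof. by rewrite /quad !cstM cst1; ring. Qed.

Lemma lin_sq_sub (a b c d : C) :
  (cst a + cst b * zz) * (cst a + cst b * zz) - (cst c + cst d * zz) * (cst c + cst d * zz)
  = quad (a * a - c * c) (a * b + b * a - (c * d + d * c)) (b * b - d * d).
Proof. by rewrite /quad !cstB !cstD !cstM; ring. Qed.

Local Notation c1 := (c1coef hbar chbar tau h W).
Local Notation ka := (kappac hbar chbar tau h W).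
Local Notation mu := (muc hbar chbar tau h W).
Local Notation al := (alphac hbar chbar tau h W).

Lemma key_quad : 0 < hbar -> 0 < chbar -> 0 < tau -> 0 < h ->
  cst ((4 / h ^+ 2)%:C * c1 ^+ 2) * quad 1 (- 2 * ka * mu%:C) (ka ^+ 2)
  = Kp (1 / h ^+ 2 + 5 * A / 6) (B / 6) * Kp (1 / h ^+ 2 + 5 * A / 6) (B / 6)
    - Dp (1 / h ^+ 2 - A / 6) (B / 6) * Dp (1 / h ^+ 2 - A / 6) (B / 6).
Proof.
move=> hb hc ht hh.
have Bp : 0 < B by apply: divr_gt0 => //; apply: mulr_gt0.
have [/andP [ph0 ph2] aE] := arg_spec (alpha_cond Bp hh).
set s := cabs al in aE *; set ph := arg02pi al in ph0 ph2 aE *.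
have sp : 0 < s by apply: cabs_gt0; move: (alpha_cond Bp hh); apply: contraTneq => ->; rewrite /= ltxx eqxx.
set co := cos ph; set si := sin ph.
have cs1 : co ^+ 2 + si ^+ 2 = 1 by rewrite cos2Dsin2.
have ReE : complex.Re al = s * co by rewrite {1}aE /cexpi /= /co; ring.
have ImE : complex.Im al = s * si by rewrite {1}aE /cexpi /= /si; ring.
have c1E : c1 ^+ 2 = (s / 4 * co) +i* (- (s / 4 * si)).
  rewrite /c1coef -/s -/ph /cexpi.
  set t := - ph / 2.
  have tt : t + t = - ph by rewrite /t; fld.
  have ct : cos t ^+ 2 - sin t ^+ 2 = co by rewrite -[co]cosN -tt cosD !expr2.
  have st : 2 * (sin t * cos t) = - si by rewrite -[si]opprK -sinN -tt sinD; ring.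
  have sq : Num.sqrt s ^+ 2 = s by rewrite sqr_sqrtr // ltW.
  rewrite expr2 /=; simpc.
  congr (_ +i* _).
    transitivity (Num.sqrt s ^+ 2 / 4 * (cos t ^+ 2 - sin t ^+ 2)); first by rewrite /co /t; fld.
    by rewrite sq ct.
  transitivity (- (Num.sqrt s ^+ 2 / 4 * (- (2 * (sin t * cos t))))); first by rewrite /si /t; fld.
  by rewrite sq st opprK.
have kaE : ka = - (co +i* si) by [].
have muE : mu = (2 * A + 2 / 3 * h ^+ 2 * (A ^+ 2 + B ^+ 2)) / s.
  by rewrite /muc /betac acoef_eq cabs_sq.
have PE : 2 * A + 2 / 3 * h ^+ 2 * (A ^+ 2 - B ^+ 2) = s * co by rewrite -ReE alpha_eq.
have QE : 2 * B + 2 / 3 * h ^+ 2 * (2 * A * B) = s * si by rewrite -ImE alpha_eq.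
rewrite cst_quad lin_sq_sub; congr quad.
- have hz : h != 0 by rewrite gt_eqF.
  rewrite c1E /=; simpc; congr (_ +i* _).
    transitivity ((s * co) / h ^+ 2); first by fld.
    by rewrite -PE; fld.
  rewrite (_ : - (4 / h ^+ 2 * (s / 4 * si)) = - (s * si) / h ^+ 2); last by fld.
  by rewrite -QE; fld.
- have hz : h != 0 by rewrite gt_eqF.
  have sz : s != 0 by rewrite gt_eqF.
  have m2 : (-2 : C) = (-2)%:C by rewrite rmorphN rmorph_nat.
  rewrite c1E kaE muE m2 /=; simpc; congr (_ +i* _).
    transitivity (2 * (2 * A + 2 / 3 * h ^+ 2 * (A ^+ 2 + B ^+ 2)) / h ^+ 2 * (co ^+ 2 + si ^+ 2)).
      by fld.
    by rewrite cs1 mulr1; fld.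
  by fld.
- have hz : h != 0 by rewrite gt_eqF.
  rewrite c1E kaE /=; simpc; congr (_ +i* _).
    transitivity ((s * co) / h ^+ 2 * (co ^+ 2 + si ^+ 2)); first by fld.
    by rewrite cs1 mulr1 -PE; fld.
  transitivity ((s * si) / h ^+ 2 * (co ^+ 2 + si ^+ 2)); first by fld.
  by rewrite cs1 mulr1 -QE; fld.
Qed.

End Facts.

Section OneDFinal.
Variable R : realType.
Local Notation C := (R[i]).
Local Notation cst := (@cst R).
Local Notation zz := (@zz R).

Lemma conj_half (x : C) : conjc (x / 2) = conjc x / 2.
Proof. by rewrite conjcM conjc_inv conjc_nat. Qed.

Lemma c1_Im (hbar chbar tau h W : R) : 0 < hbar -> 0 < chbar -> 0 < tau -> 0 < h ->
  0 < complex.Im (c1coef hbar chbar tau h W).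
Proof.
move=> hb hc ht hh.
have Bp : 0 < hbar / (tau * chbar) by apply: divr_gt0 => //; apply: mulr_gt0.
have [/andP [ph0 ph2] aE] := arg_spec (@alpha_cond R hbar chbar tau h W Bp hh).
have sp : 0 < cabs (alphac hbar chbar tau h W).
  by apply: cabs_gt0; move: (@alpha_cond R hbar chbar tau h W Bp hh); apply: contraTneq => ->; rewrite /= ltxx eqxx.
rewrite /c1coef /cexpi /=.
set s := cabs _; set ph := arg02pi _.
have -> : - ph / 2 = - (ph / 2) by rewrite mulNr.
rewrite sinN cosN.
have -> : - (Num.sqrt s / 2) * - sin (ph / 2) + - 0 * cos (ph / 2) = Num.sqrt s / 2 * sin (ph / 2).
  by ring.
apply: mulr_gt0; first by apply: divr_gt0; [rewrite sqrtr_gt0|].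
apply: sin_gt0_pi; rewrite divr_gt0 //=.
by rewrite ltr_pdivrMr // mulrC.
Qed.

Theorem oneD (hbar chbar tau h W : R) (phi : nat -> C) (M : nat) :
  0 < hbar -> 0 < chbar -> 0 < tau -> 0 < h -> phi 0%N = 0 ->
  0 <= complex.Im (\sum_(1 <= m < M.+1)
     dconv (Rseq hbar chbar tau h W) phi m * conjc ((phi m.-1 + phi m) / 2)).
Proof.
move=> hb hc ht hh phi0.
set f := Rseq hbar chbar tau h W.
set A := W / (2 * chbar); set B := hbar / (tau * chbar).
have Bp : 0 < B by apply: divr_gt0 => //; apply: mulr_gt0.
have FF : PS f * PS f = cst (f 0%N ^+ 2) *
   quad 1 (- 2 * kappac hbar chbar tau h W * (muc hbar chbar tau h W)%:C)
          (kappac hbar chbar tau h W ^+ 2).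
  apply: ode_square; first exact: Rseq1.
  exact: Rseq_rec.
set L := cst (2 / h)%:C * PS f.
have LL : L * L = Kp (1 / h ^+ 2 + 5 * A / 6) (B / 6) * Kp (1 / h ^+ 2 + 5 * A / 6) (B / 6)
    - Dp (1 / h ^+ 2 - A / 6) (B / 6) * Dp (1 / h ^+ 2 - A / 6) (B / 6).
  rewrite -key_quad //.
  have -> : L * L = cst ((2 / h)%:C * (2 / h)%:C) * (PS f * PS f) by rewrite /L cstM; ring.
  rewrite FF mulrA -cstM; congr (cst _ * _).
  rewrite -rmorphM; congr (_%:C * _); field.
  by rewrite gt_eqF.
have L0 : 0 < complex.Im (coef L 0).
  rewrite /L coef_cstM ImrM; apply: mulr_gt0; first by apply: divr_gt0.
  exact: c1_Im.
have := @core1D R (1 / h ^+ 2 - A / 6) (1 / h ^+ 2 + 5 * A / 6) (B / 6) L.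
move=> /(_ (divr_gt0 Bp (ltr0n _ 6)) LL L0 M (PS phi) phi0).
have -> : Bf M L (PS phi) (PS phi) = (4 / h)%:C * \sum_(1 <= m < M.+1)
     dconv f phi m * conjc ((phi m.-1 + phi m) / 2).
  rewrite /Bf mulr_sumr; apply: eq_big_nat => m /andP [m1 _].
  case: m m1 => // k _.
  rewrite /L -mulrA coef_cstM coefMps /Sp (mulrDl 1 zz) mul1r pscD coef_zM.
  rewrite conj_half conjcD.
  have -> : (4 / h)%:C = 2 * (2 / h)%:C :> C.
    by rewrite -(rmorph_nat (real_complex R) 2) -rmorphM; congr (_%:C); field; rewrite gt_eqF.
  field.
  by apply/eqP => -[/eqP]; rewrite gt_eqF.
by rewrite ImrM pmulr_rge0 // divr_gt0.
Qed.

End OneDFinal.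


Section Grid2.
Variables (R : realType) (n : nat) (X : nat -> R) (J : nat -> nat).
Local Notation C := (R[i]).
Local Notation I := (midx n J).

Lemma conjc_sum (r : seq I) (P : pred I) (F : I -> C) :
  conjc (\sum_(i <- r | P i) F i) = \sum_(i <- r | P i) conjc (F i).
Proof.
apply: (big_morph conjc) => [a b|]; first exact: conjcD.
by rewrite conjc0.
Qed.

Definition Hc : R := \prod_(k < n.-1) hstep X J k.+2.
Definition Dc : R := \prod_(k < n.-1) (2 / (J k.+2)%:R).

Lemma ip_idst (P W : I -> C) : ip X (idst P) W =
  Hc%:C * \sum_(q | interior q) P q * conjc (\sum_(j | interior j) W j * (@sinprod R n J q j)%:C).
Proof.
rewrite /ip /idst mulr_sumr.
under eq_bigr do rewrite !mulr_suml.
rewrite exchange_big /=; apply: eq_bigr => q _.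
rewrite conjc_sum !mulr_sumr; apply: eq_bigr => j _.
rewrite conjcM conjc_real; ring.
Qed.

Lemma dst_def (W : I -> C) q :
  dst W q = Dc%:C * \sum_(j | interior j) W j * (@sinprod R n J q j)%:C.
Proof. by []. Qed.

Lemma dst_avg (P Q : I -> C) q :
  dst (fun j => (P j + Q j) / 2) q = (dst P q + dst Q q) / 2.
Proof.
rewrite !dst_def.
rewrite (eq_bigr (fun j => P j * (@sinprod R n J q j)%:C / 2 + Q j * (@sinprod R n J q j)%:C / 2)); last first.
  by move=> j _; ring.
rewrite big_split -!mulr_suml /=; ring.
Qed.

Lemma term_eq (hbar chbar Vinf tau : R) (Phi : nat -> I -> C) (m : nat) :
  Dc != 0 ->
  ip X (Sref X hbar chbar Vinf tau Phi m) (fun j => (Phi m.-1 j + Phi m j) / 2) * tau%:C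
  = \sum_(q | interior q)
      (Hc * tau * (\prod_(k < n.-1) sigmak X J k.+2 (q k)) / Dc)%:C *
      (dconv (Rseq hbar chbar tau (hstep X J 1) (Vq X chbar Vinf q)) (fun p => dst (Phi p) q) m
       * conjc ((dst (Phi m.-1) q + dst (Phi m) q) / 2)).
Proof.
move=> Dz.
rewrite /Sref ip_idst mulr_sumr mulr_suml; apply: eq_bigr => q _.
set sg := (\prod_(k < n.-1) sigmak X J k.+2 (q k)).
set d := dconv _ _ m.
have E : \sum_(j | interior j) (Phi m.-1 j + Phi m j) / 2 * (@sinprod R n J q j)%:C
    = ((dst (Phi m.-1) q + dst (Phi m) q) / 2) / Dc%:C.
  rewrite -dst_avg dst_def mulrC mulrA mulVf ?mul1r //.
  by apply/eqP => -[/eqP]; rewrite (negPf Dz).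
rewrite E conjcM conjc_inv conjc_real.
rewrite !rmorphM fmorphV.
have Dz' : Dc%:C != 0 :> C by apply/eqP => -[/eqP]; rewrite (negPf Dz).
by field.
Qed.

End Grid2.

Unset Implicit Arguments.
Set Strict Implicit.


Theorem lemma4p1 (R : realType) (n : nat) (hbar chbar Vinf tau : R)
  (X : nat -> R) (J : nat -> nat) (Phi : nat -> midx n J -> R[i]) (M : nat) :
  (2 <= n)%N -> 0 < hbar -> 0 < chbar -> 0 < tau ->
  (forall l, (1 <= l <= n)%N -> 0 < X l) ->
  (forall l, (1 <= l <= n)%N -> (2 <= J l)%N) ->
  (forall j, interior j -> Phi 0%N j = 0) ->
  (1 <= M)%N ->
  0 <= complex.Im
    (\sum_(1 <= m < M.+1)
       ip X (Sref X hbar chbar Vinf tau Phi m)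
            (fun j => (Phi m.-1 j + Phi m j) / 2) * tau%:C).
Proof.
move=> n2 hb hc ht Xp Jp Phi0 M1.
have Jpos : forall l, (1 <= l <= n)%N -> 0 < (J l)%:R :> R.
  by move=> l hl; rewrite ltr0n; apply: leq_trans (Jp l hl).
have hsp : forall l, (1 <= l <= n)%N -> 0 < hstep X J l.
  by move=> l hl; rewrite /hstep divr_gt0 // ?Xp ?Jpos.
have Hcp : 0 < @Hc R n X J.
  rewrite /Hc; apply: prodr_gt0 => k _; apply: hsp.
  have := ltn_ord k; lia.
have Dcp : 0 < @Dc R n J.
  rewrite /Dc; apply: prodr_gt0 => k _; apply: divr_gt0 => //; apply: Jpos.
  have := ltn_ord k; lia.
have Dz : @Dc R n J != 0 by rewrite gt_eqF.
have h1p : 0 < hstep X J 1 by apply: hsp; lia.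
under eq_bigr do rewrite term_eq //.
rewrite exchange_big /= Im_sum; apply: sumr_ge0 => q _.
rewrite -mulr_sumr ImrM; apply: mulr_ge0.
  apply: divr_ge0; last exact: ltW.
  apply: mulr_ge0; first by apply: mulr_ge0; apply: ltW.
  apply: prodr_ge0 => k _; rewrite /sigmak.
  set s := sin _.
  have : s ^+ 2 <= 1 by rewrite -(cos2Dsin2 (pi * (q k)%:R * hstep X J k.+2 / (2 * X k.+2))) lerDr sqr_ge0.
  lra.
apply: oneD => //.
rewrite dst_def big1 ?mulr0 // => j jint.
by rewrite Phi0 // mul0r.
Qed.
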